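(* Let $e:\mathbb{R}^n\to\mathbb{R}^n$ and $f:\mathbb{R}^n\times\mathbb{R}^m\to\mathbb{R}^n$ be continuously differentiable and consider the implicit model $e(x_{t+1})=f(x_t,u_t)$. Suppose there exists $\epsilon>0$ with $E(x)+E(x)^\top\succ\epsilon I$ for all $x$, that $F(x,u)\ge 0$, $K(x,u)\ge 0$ and $E(x)\in\mathbb{M}^n$ for all $(x,u)$, and that $e(0)=f(0,0)$. Then the model is positive.
   Context: Consider discrete-time implicit models $e(x_{t+1})=f(x_t,u_t)$, $t=0,1,2,\dots$, with state $x_t\in\mathbb{R}^n$ and input $u_t\in\mathbb{R}^m$, where $e$ and $f$ are continuously differentiable. Write $E=\partial e/\partial x$, $F=\partial f/\partial x$, $K=\partial f/\partial u$. The model is well-posed if for every $(x_t,u_t)$ there is a unique $x_{t+1}$ satisfying the model equation. The model is positive if for all inputs with $u_t\ge0$ for all $t$ and all initial conditions $x_0\ge 0$, the resulting trajectory satisfies $x_t\ge0$ for all $t$. Inequalities between vectors/matrices are elementwise; $M\succ0$ means positive definite. $\mathbb{M}^n$ denotes the set of $n\times n$ nonsingular M-matrices: real matrices with all off-diagonal entries $\le 0$ and all eigenvalues having positive real part. *)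

(* Defs.v *)
From mathcomp Require Import all_boot all_algebra.
From mathcomp Require Import all_classical all_reals all_analysis.
From mathcomp Require Import complex.
Import GRing.Theory Num.Theory.
Import numFieldNormedType.Exports.
Set Implicit Arguments.
Unset Strict Implicit.
Unset Printing Implicit Defensive.
Local Open Scope ring_scope.

Section Defs.
Variable R : realType.

Definition C1 n m (g : 'rV[R]_n -> 'rV[R]_m) : Prop :=
  (forall x, differentiable g x) /\ continuous (jacobian g).

(* Standard (m x n) Jacobian matrix dg/dx at x: entry (i,j) = d g_i / d x_j.
   (MathComp-Analysis' [jacobian] uses the transposed, row-vector convention.) *)
Definition Jac n m (g : 'rV[R]_n -> 'rV[R]_m) (x : 'rV[R]_n) : 'M[R]_(m, n) :=
  (jacobian g x)^T.

Definition uncurry_rV n m (f : 'rV[R]_n -> 'rV[R]_m -> 'rV[R]_n)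
  : 'rV[R]_(n + m) -> 'rV[R]_n := fun z => f (lsubmx z) (rsubmx z).

Definition Emx n (e : 'rV[R]_n -> 'rV[R]_n) x : 'M[R]_n := Jac e x.
Definition Fmx n m (f : 'rV[R]_n -> 'rV[R]_m -> 'rV[R]_n) x u : 'M[R]_n :=
  Jac (fun y => f y u) x.
Definition Kmx n m (f : 'rV[R]_n -> 'rV[R]_m -> 'rV[R]_n) x u : 'M[R]_(n, m) :=
  Jac (fun v => f x v) u.

Definition posdef n (A : 'M[R]_n) : Prop :=
  forall v : 'rV[R]_n, v != 0 -> 0 < (v *m A *m v^T) 0 0.

Definition nonneg_mx p q (A : 'M[R]_(p, q)) : Prop := forall i j, 0 <= A i j.

Definition Mmatrix n (A : 'M[R]_n) : Prop :=
  (forall i j : 'I_n, i != j -> A i j <= 0) /\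
  (forall z : R[i], eigenvalue (map_mx (real_complex R) A) z -> 0 < complex.Re z).

Definition positive_model n m (e : 'rV[R]_n -> 'rV[R]_n)
  (f : 'rV[R]_n -> 'rV[R]_m -> 'rV[R]_n) : Prop :=
  forall (x : nat -> 'rV[R]_n) (u : nat -> 'rV[R]_m),
    (forall t, e (x t.+1) = f (x t) (u t)) ->
    (forall t, nonneg_mx (u t)) ->
    nonneg_mx (x 0%N) ->
    forall t, nonneg_mx (x t).

End Defs.

(* Main.v *)
Require Import Defs.
From mathcomp Require Import all_boot all_algebra.
From mathcomp Require Import all_classical all_reals all_analysis.
From HB Require Import structures.
From mathcomp Require Import lra.
Import order.Order.TTheory GRing.Theory Num.Theory.
Import numFieldNormedType.Exports.
Local Open Scope ring_scope.
Set Implicit Arguments.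
Unset Strict Implicit.

Section S.
Variable R : realType.

Definition Lf n (c : 'rV[R]_n) (M : 'rV[R]_n) : R := (M *m c^T) 0 0.

Lemma Lf_lin n (c : 'rV[R]_n) : linear (Lf c).
Proof. by move=> a u v; rewrite /Lf mulmxDl -scalemxAl !mxE. Qed.

Lemma Lf_diff n (c : 'rV[R]_n) M : differentiable (Lf c) M.
Proof.
have -> : Lf c = \sum_k ((c 0 k) *: (fun N : 'rV[R]_n => N 0 k)).
  apply/funext => N; rewrite /Lf fct_sumE mxE; apply: eq_bigr => k _.
  by rewrite mxE /= mulrC.
apply: differentiable_sum => k; apply: differentiableZ.
exact: differentiable_coord.
Qed.

Lemma path_mvt n k (g : 'rV[R]_n -> 'rV[R]_k) (dg : forall z, differentiable g z)
  (a v : 'rV[R]_n) (c : 'rV[R]_k) :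
  exists2 s, s \in `]0, 1[%R &
    Lf c (g (a + v)) - Lf c (g a) = Lf c ('d g (a + s *: v) v).
Proof.
pose LM := GRing.isLinear.Build _ _ _ _ _ (Lf_lin c).
pose L : {linear 'rV[R]_k -> R} := HB.pack (Lf c) LM.
have Lc : continuous L.
  by move=> M; apply: differentiable_continuous; exact: Lf_diff.
pose p := (cst a + *:%R^~ v : R -> 'rV[R]_n).
have hp s : is_diff s p (0 + *:%R^~ v) by apply: is_diffD.
pose phi := Lf c \o g \o p.
have dp s : differentiable p s by apply: ex_diff; exact: hp.
have dphi s : differentiable phi s.
  apply: differentiable_comp; first exact: dp.
  apply: differentiable_comp; first exact: dg.
  exact: Lf_diff.
have Dphi s : 'd phi s 1 = Lf c ('d g (a + s *: v) v).
  rewrite diff_comp //; last first.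
    apply: differentiable_comp; first exact: dg.
    exact: Lf_diff.
  rewrite diff_comp //; last exact: Lf_diff.
  have -> : 'd (Lf c) (g (p s)) = Lf c :> (_ -> R) by exact: (diff_lin (g (p s)) Lc).
  have hps := hp s; rewrite /= diff_val /= add0r scale1r.
  by [].
have H1 : forall s : R, s \in `]0, 1[%R -> is_derive s 1 phi ('d phi s 1).
  move=> s _; have := derivableP (diff_derivable (v := 1 : R) (dphi s)).
  by rewrite deriveE.
have H2 : {within `[0, 1], continuous phi}%classic.
  apply: continuous_subspaceT => s.
  exact: differentiable_continuous.
have [s0 s01 hs] := MVT ltr01 H1 H2.
exists s0 => //; move: hs; rewrite subr0 mulr1 Dphi /phi /p /= !fctE scale0r scale1r addr0.
by [].
Qed.

Lemma LfE n (c M : 'rV[R]_n) : Lf c M = \sum_j M 0 j * c 0 j.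
Proof. by rewrite /Lf mxE; apply: eq_bigr => j _; rewrite mxE. Qed.

Lemma Lf_delta n (j : 'I_n) (M : 'rV[R]_n) : Lf (delta_mx 0 j) M = M 0 j.
Proof.
rewrite LfE (bigD1 j) //= mxE !eqxx mulr1 big1 ?addr0 // => k /negbTE kj.
by rewrite mxE kj andbF mulr0.
Qed.

Lemma diff_affine n k (B : 'M[R]_(n, k)) (w : 'rV[R]_k) y :
  differentiable (fun z : 'rV[R]_n => z *m B + w) y.
Proof.
have -> : (fun z : 'rV[R]_n => z *m B + w) =
    (\sum_i (fun z : 'rV[R]_n => z 0 i *: row i B)) + cst w.
  apply/funext => z; rewrite /= fct_sumE mulmx_sum_row; congr (_ + _).
apply: differentiableD; last exact: differentiable_cst.
apply: differentiable_sum => i; apply: differentiableZl.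
exact: differentiable_coord.
Qed.

Lemma jacE n k (g : 'rV[R]_n -> 'rV[R]_k) z v j :
  ('d g z v) 0 j = \sum_i v 0 i * Jac g z j i.
Proof.
have <- := mul_rV_lin1 ('d g z) v.
by rewrite mxE; apply: eq_bigr => i _; rewrite /Jac /jacobian !mxE.
Qed.

Lemma f_mono n m (f : 'rV[R]_n -> 'rV[R]_m -> 'rV[R]_n) :
  C1 (uncurry_rV f) -> (forall x u, nonneg_mx (Fmx f x u)) ->
  (forall x u, nonneg_mx (Kmx f x u)) ->
  forall x u, nonneg_mx x -> nonneg_mx u -> forall j, f 0 0 0 j <= f x u 0 j.
Proof.
move=> [dU _] hF hK x u hx hu j.
have dfy u0 y0 : differentiable (fun y => f y u0) y0.
  have -> : (fun y => f y u0) = uncurry_rV f \o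
      (fun y => y *m row_mx (1%:M : 'M[R]_n) (0 : 'M[R]_(n, m)) + row_mx 0 u0).
    apply/funext => y; rewrite /uncurry_rV /= mul_mx_row mulmx1 mulmx0.
    by rewrite add_row_mx addr0 add0r row_mxKl row_mxKr.
  apply: differentiable_comp => //; exact: diff_affine.
have dfv x0 v0 : differentiable (fun v => f x0 v) v0.
  have -> : (fun v => f x0 v) = uncurry_rV f \o
      (fun v => v *m row_mx (0 : 'M[R]_(m, n)) (1%:M : 'M[R]_m) + row_mx x0 0).
    apply/funext => v; rewrite /uncurry_rV /= mul_mx_row mulmx1 mulmx0.
    by rewrite add_row_mx addr0 add0r row_mxKl row_mxKr.
  apply: differentiable_comp => //; exact: diff_affine.
apply: (@le_trans _ _ (f 0 u 0 j)).
  have [s _ hs] := path_mvt (dfv 0) 0 u (delta_mx 0 j).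
  move: hs; rewrite /= !Lf_delta add0r => hs.
  rewrite -subr_ge0 hs jacE; apply: sumr_ge0 => i _; apply: mulr_ge0.
    exact: hu.
  exact: (hK 0 _ j i).
have [s _ hs] := path_mvt (dfy u) 0 x (delta_mx 0 j).
move: hs; rewrite /= !Lf_delta add0r => hs.
rewrite -subr_ge0 hs jacE; apply: sumr_ge0 => i _; apply: mulr_ge0.
  exact: hx.
exact: (hF _ u j i).
Qed.

Lemma e_inv n (e : 'rV[R]_n -> 'rV[R]_n) :
  (forall z, differentiable e z) ->
  (exists eps : R, 0 < eps /\
     forall x, posdef (Emx e x + (Emx e x)^T - eps%:M)) ->
  (forall x, Mmatrix (Emx e x)) ->
  forall y, (forall j, e 0 0 j <= e y 0 j) -> nonneg_mx y.
Proof.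
move=> de [eps [eps0 hpd]] hM y hy.
pose p := \row_j (if 0 <= y 0 j then y 0 j else 0).
pose w := p - y.
have wE j : w 0 j = (if 0 <= y 0 j then y 0 j else 0) - y 0 j by rewrite !mxE.
have p_ge0 j : 0 <= p 0 j by rewrite mxE; case: ifP.
have w_ge0 j : 0 <= w 0 j.
  rewrite wE; case: ifP => [_|/negbT]; first by rewrite subrr.
  by rewrite -ltNge add0r oppr_ge0 => /ltW.
have wpos j : w 0 j != 0 -> p 0 j = 0.
  by rewrite wE mxE; case: ifP => //; rewrite subrr eqxx.
have yp : y + w = p by rewrite /w addrC subrK.
clearbody w.
case: (eqVneq w 0) => [w0 | wn0].
  move=> i j; rewrite (ord1 i).
  have <- : p = y by rewrite -yp w0 addr0.
  exact: p_ge0.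
exfalso.
have [s _ hs] := path_mvt de y w w.
rewrite yp in hs.
have hpos : 0 < Lf w ('d e (y + s *: w) w).
  set z := y + s *: w.
  have := hpd z w wn0.
  set E := Emx e z.
  have -> : Lf w ('d e z w) = (w *m E^T *m w^T) 0 0.
    by rewrite /Lf -(mul_rV_lin1 ('d e z) w) /E /Emx /Jac trmxK.
  have ab : (w *m E *m w^T) 0 0 = (w *m E^T *m w^T) 0 0.
    have -> : (w *m E *m w^T) 0 0 = ((w *m E *m w^T)^T) 0 0 by rewrite [RHS]mxE.
    by rewrite !trmx_mul trmxK mulmxA.
  have q0 : 0 <= (w *m w^T) 0 0.
    rewrite mxE; apply: sumr_ge0 => j _; rewrite [w^T _ _]mxE; exact: mulr_ge0.
  rewrite mulmxBr mulmxDr !mulmxBl !mulmxDl mul_mx_scalar -scalemxAl.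
  move: ab q0; move: (w *m E *m w^T) (w *m E^T *m w^T) (w *m w^T) => A B Q ab q0.
  rewrite !mxE ab => h.
  have : 0 <= eps * Q 0 0 by rewrite mulr_ge0 // ltW.
  lra.
have hb j : w 0 j != 0 -> e p 0 j <= e 0 0 j.
  move=> /wpos pj.
  have [s' _ hs'] := path_mvt de 0 p (delta_mx 0 j).
  move: hs'; rewrite !Lf_delta add0r => hs'.
  rewrite -subr_le0 hs' jacE; apply: sumr_le0 => k _.
  case: (eqVneq k j) => [->|kj]; first by rewrite pj mul0r.
  apply: mulr_ge0_le0; first exact: p_ge0.
  by apply: (hM _).1; rewrite eq_sym.
have hc : Lf w (e p) - Lf w (e y) <= 0.
  rewrite !LfE -sumrB; apply: sumr_le0 => j _; rewrite -mulrBl.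
  case: (eqVneq (w 0 j) 0) => [->|wj]; first by rewrite mulr0.
  apply: mulr_le0_ge0 => //; rewrite subr_le0.
  exact: le_trans (hb j wj) (hy j).
by move: hc; rewrite hs leNgt hpos.
Qed.
End S.

Theorem theorem1 (R : realType) (n m : nat)
  (e : 'rV[R]_n -> 'rV[R]_n) (f : 'rV[R]_n -> 'rV[R]_m -> 'rV[R]_n) :
  C1 e -> C1 (uncurry_rV f) ->
  (exists eps : R, 0 < eps /\
     forall x, posdef (Emx e x + (Emx e x)^T - eps%:M)) ->
  (forall x u, nonneg_mx (Fmx f x u)) ->
  (forall x u, nonneg_mx (Kmx f x u)) ->
  (forall x, Mmatrix (Emx e x)) ->
  e 0 = f 0 0 ->
  positive_model e f.
Proof.
move=> [de _] hU hpd hF hK hM e0 x u hx hu hx0 t.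
elim: t => [//|t IH].
apply: (e_inv de hpd hM) => j.
rewrite hx e0; exact: f_mono.
Qed.
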